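(* Fix $k\ge3$. Consider the recursive network formation model with the utility function described in the context. Instead of a single node, the process starts from the base graph for the $k$-star: $2k$ nodes, namely $k$ pairwise adjacent centers, each also adjacent to exactly one distinct leaf. Suppose $$\gamma=0,\qquad c=b_1-b_3,\qquad b_2-b_3<c_0<b_2-b_4.$$ Then the resulting topology is a $k$-star: for every $n\ge 2k$, the pairwise stable network reached when the network has $n$ nodes is a $k$-star network on $n$ nodes, irrespective of the random order in which nodes are selected to move.
   Context: A $k$-star network ($k\ge3$) on $n\ge 2k$ nodes consists of $k$ ''center'' nodes that are pairwise adjacent, forming a clique. Every other node is a leaf adjacent to exactly one center and to nothing else. Each center has at least one leaf, and the numbers of leaves of any two centers differ by at most one. Networks are finite simple undirected graphs whose vertices (nodes) are self-interested agents. Parameters: benefits $b_1>b_2>b_3>b_4>\dots>0$, where $b_i$ is the benefit a node obtains from a node at distance $i$; a link cost $c$ per immediate neighbor; an intermediation fraction $\gamma$ with $0\le\gamma<1$; and a network entry factor $c_0$. Notation: $N$ is the set of nodes currently in the network, $d_j$ the degree of $j$, and $l(j,w)$ the graph distance. A node $x$ is essential for a pair $y,z$ (with $x\notin\{y,z\}$) if $x$ lies on every path joining $y$ and $z$. Write $E(y,z)$ for the set of nodes essential for $y,z$ and $e(y,z)=|E(y,z)|$. Only pairs joined by a path contribute to the sums below. Utility of node $j$ in network $g$: $$u_j(g)=-c_0\,d_{T(j)}\mathbf 1_{\{j=\mathrm{NE}\}}+d_j(b_1-c)+\sum_{w\in N,\ l(j,w)>1}b_{l(j,w)}-\sum_{w\in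 N,\ E(j,w)\ne\emptyset}\gamma\, b_{l(j,w)}+\sum_{y,z\in N,\ j\in E(y,z)}\frac{\gamma}{e(y,z)}\,2\,b_{l(y,z)}.$$ Here $\mathbf 1_{\{j=\mathrm{NE}\}}=1$ exactly when $j$ is a newly entering node evaluating the creation of its first link. $T(j)$ is the existing node to which $j$ forms that first link, and $d_{T(j)}$ is that node's degree before the link. The network before entry gives the entering node utility $0$. Pairwise stability: $g$ is pairwise stable if (a) for every link $(i,j)\in g$, $u_i(g\setminus\{(i,j)\})\le u_i(g)$ and $u_j(g\setminus\{(i,j)\})\le u_j(g)$; and (b) for every non-link $(i,j)\notin g$, if $u_i(g\cup\{(i,j)\})>u_i(g)$ then $u_j(g\cup\{(i,j)\})<u_j(g)$. Recursive model of network formation (from a given base graph): - When the current network of $n-1$ nodes is pairwise stable, a new node considers entering. Its options are to stay out or to propose a link to one existing node. The link forms iff the receiving node's utility does not decrease. No existing node can link to the newcomer before it has formed this first link. - After entry, nodes are repeatedly chosen at random to move. A chosen node plays a myopic best response among three options: create a link with a non-neighbor (the link forms only if the other node's utility does not decrease, which the proposer anticipates); delete a link with a neighbor (unilaterally); or keep the status quo. It alters a link only if this strictly increases its current utility. - This continues until the network is pairwise stable; then the next node considers entering, and so on. *)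

(* Defs.v *)
From HB Require Import structures.
From mathcomp Require Import all_boot all_order all_algebra.
From Stdlib Require Import Relations.
Set Implicit Arguments. Unset Strict Implicit. Unset Printing Implicit Defensive.
Import Order.TTheory GRing.Theory Num.Theory.
Local Open Scope ring_scope.

(* A network: nodes are 0, ..., nn-1; [adj] is an (un-normalised) adjacency
   function, only read through [edge] below. *)
Record net := Net { nn : nat; adj : nat -> nat -> bool }.

Definition nodes (g : net) : seq nat := iota 0 (nn g).

Definition edge (g : net) (x y : nat) : bool :=
  [&& (x < nn g)%N, (y < nn g)%N, x != y & adj g x y || adj g y x].

Definition deg (g : net) (j : nat) : nat := count (edge g j) (nodes g).

(* walkin e ns m x y : there is a walk of length <= m from x to y along e,
   through nodes of ns *)
Fixpoint walkin (e : rel nat) (ns : seq nat) (m : nat) (x y : nat) : bool :=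
  if m is m'.+1 then
    walkin e ns m' x y || has (fun z => walkin e ns m' x z && e z y) ns
  else (x == y) && (x \in ns).

Definition conn (g : net) (y z : nat) : bool := walkin (edge g) (nodes g) (nn g) y z.

(* graph distance l(y,z) (only meaningful when conn g y z) *)
Definition dist (g : net) (y z : nat) : nat :=
  find (fun m => walkin (edge g) (nodes g) m y z) (iota 0 (nn g)).

(* x is essential for y,z: x not in {y,z}, y and z are joined by a path,
   and every path joining y and z passes through x (i.e. there is no path
   from y to z avoiding x). *)
Definition ess (g : net) (x y z : nat) : bool :=
  [&& x != y, x != z, conn g y z &
      ~~ walkin (fun a b => [&& edge g a b, a != x & b != x]) (nodes g) (nn g) y z].

Definition ecount (g : net) (y z : nat) : nat := count (fun x => ess g x y z) (nodes g).

Section Utility.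
Variable R : realFieldType.
Variables (b : nat -> R) (c gam : R).

(* utility of an existing node j in g (without the entry term) *)
Definition util (g : net) (j : nat) : R :=
  (deg g j)%:R * (b 1%N - c)
  + \sum_(w <- nodes g | conn g j w && (1 < dist g j w)%N) b (dist g j w)
  - \sum_(w <- nodes g | has (fun x => ess g x j w) (nodes g)) gam * b (dist g j w)
  + \sum_(y <- nodes g) \sum_(z <- nodes g | (y < z)%N && ess g j y z)
        gam / (ecount g y z)%:R * 2%:R * b (dist g y z).

Definition same_pair (i j x y : nat) : bool :=
  ((x == i) && (y == j)) || ((x == j) && (y == i)).

Definition add_link (g : net) (i j : nat) : net :=
  Net (nn g) (fun x y => adj g x y || same_pair i j x y).

Definition del_link (g : net) (i j : nat) : net :=
  Net (nn g) (fun x y => adj g x y && ~~ same_pair i j x y && ~~ same_pair i j y x).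

Definition pairwise_stable (g : net) : Prop :=
  (forall i j, edge g i j ->
     util (del_link g i j) i <= util g i /\ util (del_link g i j) j <= util g j) /\
  (forall i j, (i < nn g)%N -> (j < nn g)%N -> i != j -> ~~ edge g i j ->
     util g i < util (add_link g i j) i -> util (add_link g i j) j < util g j).

(* options of node i in a myopic best response (other than the status quo) *)
Definition move_option (g : net) (i : nat) (g' : net) : Prop :=
  (exists j, (j < nn g)%N /\ j != i /\ ~~ edge g i j /\
     util g j <= util (add_link g i j) j /\ g' = add_link g i j) \/
  (exists j, edge g i j /\ g' = del_link g i j).

(* node i, chosen to move, plays a myopic best response that strictly
   increases its utility (ties between maximisers broken arbitrarily) *)
Definition move_step (g g' : net) : Prop :=
  ~ pairwise_stable g /\
  exists i, (i < nn g)%N /\ move_option g i g' /\ util g i < util g' i /\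
    (forall g'', move_option g i g'' -> util g'' i <= util g' i).

Definition enter (g : net) (T : nat) : net :=
  add_link (Net (nn g).+1 (fun x y => [&& adj g x y, (x < nn g)%N & (y < nn g)%N]))
           (nn g) T.

Definition accepts (g : net) (T : nat) : Prop :=
  (T < nn g)%N /\ util g T <= util (enter g T) T.

Variable c0 : R.

Definition entry_value (g : net) (T : nat) : R :=
  - c0 * (deg g T)%:R + util (enter g T) (nn g).

(* when g is pairwise stable, a newcomer enters by proposing a link to an
   accepting node T that is a best response, better than staying out (0) *)
Definition entry_step (g g' : net) : Prop :=
  pairwise_stable g /\
  exists T, accepts g T /\ 0 < entry_value g T /\
    (forall T', accepts g T' -> entry_value g T' <= entry_value g T) /\
    g' = enter g T.

Definition step (g g' : net) : Prop := move_step g g' \/ entry_step g g'.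

End Utility.

Definition kstar_base (k : nat) : net :=
  Net (k + k)%N (fun x y => [&& (x < k)%N, (y < k)%N & x != y] || [&& (x < k)%N & y == x + k]).

Definition leaf_count (g : net) (cen : seq nat) (x : nat) : nat :=
  count (fun w => (w \notin cen) && edge g x w) (nodes g).

Definition is_kstar (k : nat) (g : net) : Prop :=
  (k + k <= nn g)%N /\
  exists cen : seq nat,
    [/\ uniq cen, size cen = k & all (fun x => (x < nn g)%N) cen] /\
    [/\ (forall x y, x \in cen -> y \in cen -> x != y -> edge g x y),
     (forall w, (w < nn g)%N -> w \notin cen ->
        deg g w = 1%N /\ exists x, x \in cen /\ edge g w x) &
     forall x y, x \in cen -> y \in cen ->
       (1 <= leaf_count g cen x)%N /\ (leaf_count g cen x <= (leaf_count g cen y).+1)%N].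

(* Main.v *)
Require Import Defs.
From HB Require Import structures.
From mathcomp Require Import all_boot all_order all_algebra.
From mathcomp Require Import zify ring lra.
From Stdlib Require Import Relations.
Set Implicit Arguments. Unset Strict Implicit. Unset Printing Implicit Defensive.
Import Order.TTheory GRing.Theory Num.Theory.
Local Open Scope ring_scope.


Section Walk.
Variables (e : rel nat) (N s : nat) (dl : nat -> option nat) (pi : nat -> nat).
Hypothesis Hs : (s < N)%N.
Hypothesis C1 : dl s = Some 0%N.
Hypothesis C2 : forall w, dl w = Some 0%N -> w = s.
Hypothesis C3 : forall w m, dl w = Some m.+1 -> dl (pi w) = Some m /\ e (pi w) w.
Hypothesis C4 : forall u w m, e u w -> dl u = Some m -> exists m', dl w = Some m' /\ (m' <= m.+1)%N.
Hypothesis C5 : forall u w, e u w -> (u < N)%N.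

Lemma walk_iff m w : walkin e (iota 0 N) m s w = (if dl w is Some d then (d <= m)%N else false).
Proof.
elim: m w => [|m IH] w /=.
  case: eqP => [<-|Hne]; first by rewrite C1 mem_iota /=; lia.
  case E: (dl w) => [[|d]|] //. by case: Hne; rewrite (C2 E).
apply/idP/idP.
  case/orP; first by rewrite IH; case: (dl w) => // d; lia.
  case/hasP => z _ /andP[]; rewrite IH; case Ez: (dl z) => [d|] // Hd Hzw.
  have [m' [-> Hm']] := C4 Hzw Ez. lia.
case Ew: (dl w) => [d|] // Hd.
case: (leqP d m) => Hdm; first by rewrite IH Ew Hdm.
have Ed : d = m.+1 by lia. subst d.
have [Ep Hp] := C3 Ew.
apply/orP; right; apply/hasP; exists (pi w).
  by rewrite mem_iota; have := C5 Hp; lia.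
by rewrite IH Ep leqnn Hp.
Qed.
End Walk.

Lemma find_le d a n : (a <= d < a + n)%N -> find (fun m => d <= m)%N (iota a n) = (d - a)%N.
Proof.
elim: n a => [|n IH] a /=; first lia.
move=> H; case: (leqP d a) => Hda /=; first lia.
rewrite IH; lia.
Qed.

Section Util.
Variables (R : realFieldType) (b : nat -> R).

Definition F (o : option nat) : R := if o is Some d then (if (1 < d)%N then b d else 0) else 0.

Lemma util_cert (c : R) (g : net) s dl pi :
  (s < nn g)%N -> dl s = Some 0%N -> (forall w, dl w = Some 0%N -> w = s) ->
  (forall w m, dl w = Some m.+1 -> dl (pi w) = Some m /\ edge g (pi w) w) ->
  (forall u w m, edge g u w -> dl u = Some m -> exists m', dl w = Some m' /\ (m' <= m.+1)%N) ->
  (forall w d, dl w = Some d -> (d < nn g)%N) ->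
  util b c 0 g s = (deg g s)%:R * (b 1%N - c) + \sum_(w <- nodes g) F (dl w).
Proof.
move=> Hs C1 C2 C3 C4 C6.
have C5 : forall u w, edge g u w -> (u < nn g)%N by move=> u w /and4P[].
rewrite /util.
rewrite [X in _ - X]big1 ?subr0; last by move=> i _; rewrite mul0r.
rewrite [X in _ + X]big1_seq ?addr0; last first.
  by move=> i _; rewrite big1 // => j _; rewrite !mul0r.
congr (_ + _).
rewrite big_mkcond; apply: eq_big_seq => w Hw /=.
rewrite /conn /dist.
have WI := walk_iff Hs C1 C2 C3 C4 C5.
rewrite WI.
rewrite (@eq_find _ _ (fun m => if dl w is Some d then (d <= m)%N else false)); last by move=> m; rewrite WI.
rewrite /F; case Ew: (dl w) => [d|].
  have Hd := C6 _ _ Ew. rewrite (leq_trans (ltnW Hd) (leqnn _)) find_le ?subn0 //; lia.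
by [].
Qed.

Lemma sumF (dl : nat -> option nat) (s : seq nat) :
  (forall w d, dl w = Some d -> (d <= 4)%N) ->
  \sum_(w <- s) F (dl w) =
  (count (fun w => dl w == Some 2%N) s)%:R * b 2%N
  + (count (fun w => dl w == Some 3%N) s)%:R * b 3%N
  + (count (fun w => dl w == Some 4%N) s)%:R * b 4%N.
Proof.
move=> H; elim: s => [|w s IH]; first by rewrite big_nil !mul0r !addr0.
rewrite big_cons IH /= !natrD !mulrDl.
case E: (dl w) => [d|] /=; last by rewrite !mul0r !add0r.
have := H _ _ E.
case: d E => [|[|[|[|[|d]]]]] E //= _; rewrite /F /= ?mul1r ?mul0r ?add0r ?addr0 ; lra.
Qed.
End Util.

Definition cke (k N : nat) (p : nat -> nat) (x y : nat) : bool :=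
 [&& (x < N)%N, (y < N)%N & [|| [&& (x < k)%N, (y < k)%N & x != y],
     (k <= y)%N && (x == p y) | (k <= x)%N && (y == p x)]].

Definition Lc k N (p : nat -> nat) (c : nat) := count (fun w => (k <= w)%N && (p w == c)) (iota 0 N).

Lemma count_lin (a b c d : pred nat) s :
  (forall w, w \in s -> a w + b w = c w + d w)%N ->
  (count a s + count b s = count c s + count d s)%N.
Proof.
elim: s => //= x s IH H.
have := H x (mem_head _ _). have := IH (fun w Hw => H w (mem_behead (s:=x::s) Hw)). lia.
Qed.

Lemma count_linE (a b c d : pred nat) s :
  (forall w, w \in s -> a w + b w = c w + d w)%N ->
  count a s = (count c s + count d s - count b s)%N.
Proof. move/count_lin; lia. Qed.

Lemma count_lt k N : (k <= N)%N -> count (fun w => w < k)%N (iota 0 N) = k.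
Proof.
elim: N => [|N IH] H; first by have -> : k = 0%N by lia.
rewrite -addn1 iotaD count_cat /= add0n.
case: (leqP k N) => HkN; first by rewrite IH //; lia.
have -> : k = N.+1 by lia.
rewrite (@eq_in_count _ _ predT); last by move=> x; rewrite mem_iota /=; lia.
by rewrite count_predT size_iota; lia.
Qed.

Lemma count_ge k N : count (fun w => k <= w)%N (iota 0 N) = (N - k)%N.
Proof.
case: (leqP k N) => H.
  have := count_predC (fun w => w < k)%N (iota 0 N).
  rewrite count_lt // size_iota.
  rewrite (@eq_count _ (predC _) (fun w => k <= w)%N); last by move=> x /=; lia.
  lia.
rewrite (@eq_in_count _ _ pred0); last by move=> x; rewrite mem_iota /=; lia.
by rewrite count_pred0; lia.
Qed.

Lemma count1 a N : (a < N)%N -> count (fun w => w == a) (iota 0 N) = 1%N.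
Proof.
move=> H. have := count_uniq_mem a (iota_uniq 0 N).
rewrite mem_iota H /= => <-. by apply: eq_count => x /=.
Qed.

Lemma count2 a a' N : (a < N)%N -> (a' < N)%N -> a != a' ->
  count (fun w => (w == a) || (w == a')) (iota 0 N) = 2%N.
Proof.
move=> H H' Hne.
rewrite (@count_linE _ pred0 (fun w => w == a) (fun w => w == a')) ?count1 ?count_pred0 //.
move=> w _ /=; lia.
Qed.

Lemma count3 a a' a'' N : (a < N)%N -> (a' < N)%N -> (a'' < N)%N -> a != a' -> a != a'' -> a' != a'' ->
  count (fun w => [|| w == a, w == a' | w == a'']) (iota 0 N) = 3%N.
Proof.
move=> H H' H'' ? ? ?.
rewrite (@count_linE _ pred0 (fun w => w == a) (fun w => (w == a') || (w == a''))) ?count1 ?count2 ?count_pred0 //.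
move=> w _ /=; lia.
Qed.

Lemma count0 N : count (fun w : nat => false) (iota 0 N) = 0%N.
Proof. exact: count_pred0. Qed.

Ltac substs := repeat match goal with H : is_true (?x == ?y) |- _ => move/eqP: H => H; try subst x; try subst y end.
Ltac cfin := intros; substs; repeat match goal with
 | H : None = Some _ |- _ => discriminate H
 | H : Some _ = Some _ |- _ => case: H => H
 end; try reflexivity; try (congr Some; lia); try (split; [congr Some; lia| lia]); try (eexists; split; [reflexivity | lia]); try (exfalso; lia); try lia.

Lemma same_pairC i j x y : same_pair i j x y = same_pair j i x y.
Proof. rewrite /same_pair; lia. Qed.

Lemma same_pairS i j x y : same_pair i j x y = same_pair i j y x.
Proof. rewrite /same_pair; lia. Qed.

Lemma edge_del g i j x y : edge (del_link g i j) x y = edge g x y && ~~ same_pair i j x y.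
Proof.
rewrite /edge /del_link /= (same_pairS i j y x).
case: (adj g x y); case: (adj g y x); case: (same_pair i j x y); rewrite /= ?andbF ?andbT //.
Qed.

Lemma edge_add g i j x y : (i < nn g)%N -> (j < nn g)%N -> i != j ->
  edge (add_link g i j) x y = edge g x y || same_pair i j x y.
Proof.
move=> Hi Hj Hij; rewrite /edge /add_link /= (same_pairS i j y x).
rewrite /same_pair; case: (adj g x y); case: (adj g y x); rewrite /= ?orbT ?orbF ?andbT; lia.
Qed.

Lemma edge_enter g T x y : (T < nn g)%N ->
  edge (enter g T) x y = edge g x y || same_pair (nn g) T x y.
Proof.
move=> HT; rewrite /edge /enter /add_link /= (same_pairS (nn g) T y x).
rewrite /same_pair; case: (adj g x y); case: (adj g y x); rewrite /= ?orbT ?orbF ?andbT ?andbF; lia.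
Qed.

Lemma count_last (P : pred nat) N : count (fun w => (w < N)%N && P w) (iota 0 N.+1) = count P (iota 0 N).
Proof.
rewrite -addn1 iotaD count_cat /= add0n ltnn /= !addn0.
by apply: eq_in_count => w; rewrite mem_iota => /andP[_ ->].
Qed.

Section CK.
Variables (R : realFieldType) (b : nat -> R).
Variables (k N : nat) (p : nat -> nat).
Hypothesis Hk : (3 <= k)%N.
Hypothesis HN : (k + k <= N)%N.
Hypothesis Hp : forall w, (p w < k)%N.

Notation L := (Lc k N p).
Notation U g s := (util b (b 1%N - b 3%N) 0 g s).

Lemma util_form (g : net) s dl pi :
  (s < nn g)%N -> dl s = Some 0%N -> (forall w, dl w = Some 0%N -> w = s) ->
  (forall w m, dl w = Some m.+1 -> dl (pi w) = Some m /\ edge g (pi w) w) ->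
  (forall u w m, edge g u w -> dl u = Some m -> exists m', dl w = Some m' /\ (m' <= m.+1)%N) ->
  (forall w d, dl w = Some d -> (d <= 4)%N) -> (5 <= nn g)%N ->
  U g s = (deg g s)%:R * b 3%N
  + (count (fun w => dl w == Some 2%N) (nodes g))%:R * b 2%N
  + (count (fun w => dl w == Some 3%N) (nodes g))%:R * b 3%N
  + (count (fun w => dl w == Some 4%N) (nodes g))%:R * b 4%N.
Proof.
move=> Hs C1 C2 C3 C4 C6 H5.
rewrite (util_cert _ _ Hs C1 C2 C3 C4); last by move=> w d /C6; lia.
rewrite sumF //. rewrite !addrA. congr (_ * _ + _ + _ + _). ring.
Qed.

Section Cert1.
Variable g : net.
Hypothesis Hg : nn g = N.
Hypothesis HE : forall x y, edge g x y = cke k N p x y.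
Variable c : nat.
Hypothesis Hc : (c < k)%N.

Definition d1 w := if (N <= w)%N then None else if w == c then Some 0%N
  else if (w < k)%N then Some 1%N else if p w == c then Some 1%N else Some 2%N.
Definition pi1 w := if (w < k)%N then c else if p w == c then c else p w.

Lemma cert1 : U g c = (k - 1 + L c)%:R * b 3%N + (N - k - L c)%:R * b 2%N.
Proof.
rewrite (@util_form g c d1 pi1); rewrite ?Hg; try lia.
- have E1 : deg g c = (k - 1 + L c)%N.
    rewrite /deg /nodes Hg.
    rewrite (@count_linE _ (fun w => w == c) (fun w => w < k)%N (fun w => (k<=w)%N && (p w == c))); last first.
      move=> w; rewrite mem_iota HE /cke => Hw; have := Hp w; lia.
    rewrite count_lt ?count1 /L /Lc; lia.
  have E2 : count (fun w => d1 w == Some 2%N) (nodes g) = (N - k - L c)%N.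
    rewrite /nodes Hg.
    rewrite (@count_linE _ (fun w => (k<=w)%N && (p w == c)) (fun w => k <= w)%N (fun w => false)); last first.
      move=> w; rewrite mem_iota /d1 => Hw; do ! case: ifP; move=> /= *; substs; lia.
    rewrite count_ge count0 /L /Lc; lia.
  have E3 : count (fun w => d1 w == Some 3%N) (nodes g) = 0%N.
    rewrite (@eq_in_count _ _ pred0) ?count_pred0 // /nodes Hg.
    move=> w; rewrite mem_iota /d1 => Hw; do ! case: ifP => //.
  have E4 : count (fun w => d1 w == Some 4%N) (nodes g) = 0%N.
    rewrite (@eq_in_count _ _ pred0) ?count_pred0 // /nodes Hg.
    move=> w; rewrite mem_iota /d1 => Hw; do ! case: ifP => //.
  rewrite E1 E2 E3 E4 !mul0r !addr0. ring.
- by rewrite /d1 eqxx; case: ifP => //; lia.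
- move=> w; rewrite /d1; do ! case: ifP => //; move=> *; lia.
- move=> w m; rewrite HE /d1 /pi1 /cke; have := Hp w; have := Hp c; do ! case: ifP;
  cfin.
- move=> u w m; rewrite HE /cke /d1; have := Hp u; have := Hp w; have := Hp c; do ! case: ifP; cfin.
- move=> w d; rewrite /d1; do ! case: ifP => //; cfin.
Qed.
End Cert1.

Lemma deg_center g c : nn g = N -> (forall x y, edge g x y = cke k N p x y) -> (c < k)%N ->
  deg g c = (k - 1 + L c)%N.
Proof.
move=> Hg HE Hc; rewrite /deg /nodes Hg.
rewrite (@count_linE _ (fun w => w == c) (fun w => w < k)%N (fun w => (k<=w)%N && (p w == c))); last first.
  move=> w; rewrite mem_iota HE /cke => Hw; have := Hp w; lia.
rewrite count_lt ?count1 /L /Lc; lia.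
Qed.

Lemma deg_leaf g l : nn g = N -> (forall x y, edge g x y = cke k N p x y) -> (k <= l < N)%N ->
  deg g l = 1%N.
Proof.
move=> Hg HE Hl; rewrite /deg /nodes Hg.
rewrite (@count_linE _ pred0 (fun w => w == p l) pred0); last first.
  move=> w; rewrite mem_iota HE /cke => Hw; have := Hp w; have := Hp l; lia.
rewrite count1 ?count_pred0 //; have := Hp l; lia.
Qed.

Ltac certstart g s d pi Hg := rewrite (@util_form g s d pi); rewrite ?Hg; try lia;
  [ | by rewrite /d; do ! case: ifP; cfin
    | by move=> w; rewrite /d; do ! case: ifP; cfin
    | idtac | idtac
    | by move=> w dd; rewrite /d; do ! case: ifP; cfin].

Section Cert2.
Variable g : net.
Hypothesis Hg : nn g = N.
Hypothesis HE : forall x y, edge g x y = cke k N p x y.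
Variable l : nat.
Hypothesis Hl : (k <= l < N)%N.

Definition d2 w := if (N <= w)%N then None else if w == l then Some 0%N
  else if w == p l then Some 1%N else if (w < k)%N then Some 2%N
  else if p w == p l then Some 2%N else Some 3%N.
Definition pi2 w := if w == p l then l else if (w < k)%N then p l else if p w == p l then p l else p w.

Lemma cert2 : U g l = b 3%N + (k + L (p l) - 2)%:R * b 2%N + (N - k - L (p l))%:R * b 3%N.
Proof.
have Hpl := Hp l.
certstart g l d2 pi2 Hg.
- rewrite (deg_leaf Hg HE Hl).
  have E2 : count (fun w => d2 w == Some 2%N) (nodes g) = (k + L (p l) - 2)%N.
    rewrite /nodes Hg.
    rewrite (@count_linE _ (fun w => (w == p l) || (w == l)) (fun w => w < k)%N (fun w => (k<=w)%N && (p w == p l))); last first.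
      move=> w; rewrite mem_iota /d2 => Hw; do ! case: ifP; move=> /= *; substs; lia.
    rewrite count_lt ?count2 /L /Lc; lia.
  have E3 : count (fun w => d2 w == Some 3%N) (nodes g) = (N - k - L (p l))%N.
    rewrite /nodes Hg.
    rewrite (@count_linE _ (fun w => (k<=w)%N && (p w == p l)) (fun w => k <= w)%N pred0); last first.
      move=> w; rewrite mem_iota /d2 => Hw; do ! case: ifP; move=> /= *; substs; lia.
    rewrite count_ge count_pred0 /L /Lc; lia.
  have E4 : count (fun w => d2 w == Some 4%N) (nodes g) = 0%N.
    rewrite (@eq_in_count _ _ pred0) ?count_pred0 // /nodes Hg.
    move=> w; rewrite mem_iota /d2 => Hw; do ! case: ifP => //.
  rewrite E2 E3 E4 !mul0r !addr0 mul1r //.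
- move=> w m; rewrite HE /cke /d2 /pi2; have := Hp w; do ! case: ifP; cfin.
- move=> u w m; rewrite HE /cke /d2; have := Hp u; have := Hp w; do ! case: ifP; cfin.
Qed.
End Cert2.

Section Cert34.
Variable g : net.
Hypothesis Hg : nn g = N.
Variables c l : nat.
Hypothesis HE : forall x y, edge g x y = cke k N p x y && ~~ same_pair c l x y.
Hypothesis Hc : (c < k)%N.
Hypothesis Hl : (k <= l < N)%N.
Hypothesis Hpl : p l = c.

Definition d3 w := if (N <= w)%N then None else if w == c then Some 0%N
  else if w == l then None
  else if (w < k)%N then Some 1%N else if p w == c then Some 1%N else Some 2%N.

Lemma cert3 : U g c = (k - 2 + L c)%:R * b 3%N + (N - k - L c)%:R * b 2%N.
Proof.
certstart g c d3 (pi1 c) Hg.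
- have E1 : deg g c = (k - 2 + L c)%N.
    rewrite /deg /nodes Hg.
    rewrite (@count_linE _ (fun w => (w == c) || (w == l)) (fun w => w < k)%N (fun w => (k<=w)%N && (p w == c))); last first.
      move=> w; rewrite mem_iota HE /cke /same_pair => Hw; have := Hp w; case: (eqVneq w l) => [->|]; lia.
    rewrite count_lt ?count2 /L /Lc; try lia.
  have E2 : count (fun w => d3 w == Some 2%N) (nodes g) = (N - k - L c)%N.
    rewrite /nodes Hg.
    rewrite (@count_linE _ (fun w => (k<=w)%N && (p w == c)) (fun w => k <= w)%N (fun w => false)); last first.
      move=> w; rewrite mem_iota /d3 => Hw; do ! case: ifP; move=> /= *; substs; lia.
    rewrite count_ge count0 /L /Lc; lia.
  have E3 : count (fun w => d3 w == Some 3%N) (nodes g) = 0%N.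
    rewrite (@eq_in_count _ _ pred0) ?count_pred0 // /nodes Hg.
    move=> w; rewrite mem_iota /d3 => Hw; do ! case: ifP => //.
  have E4 : count (fun w => d3 w == Some 4%N) (nodes g) = 0%N.
    rewrite (@eq_in_count _ _ pred0) ?count_pred0 // /nodes Hg.
    move=> w; rewrite mem_iota /d3 => Hw; do ! case: ifP => //.
  rewrite E1 E2 E3 E4 !mul0r !addr0 //.
- move=> w m; rewrite HE /cke /same_pair /d3 /pi1; have := Hp w; have := Hp l; do ! case: ifP; cfin.
- move=> u w m; rewrite HE /cke /same_pair /d3; have := Hp u; have := Hp w; do ! case: ifP; cfin.
Qed.

Definition d4 w := if w == l then Some 0%N else None.

Lemma cert4 : U g l = 0.
Proof.
certstart g l d4 (fun w : nat => w) Hg.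
- have E1 : deg g l = 0%N.
    rewrite /deg (@eq_in_count _ _ pred0) ?count_pred0 // /nodes Hg.
    move=> w; rewrite mem_iota HE /cke /same_pair /= => Hw; have := Hp w; have := Hp l; lia.
  have E : forall d, count (fun w => d4 w == Some d.+2) (nodes g) = 0%N.
    move=> d; rewrite (@eq_in_count _ _ pred0) ?count_pred0 // /nodes Hg.
    by move=> w; rewrite /d4; case: ifP.
  rewrite E1 !E !mul0r !addr0 //.
- by move=> w m; rewrite /d4; case: ifP.
- move=> u w m; rewrite HE /cke /same_pair /d4; have := Hp u; have := Hp w; do ! case: ifP; cfin.
Qed.
End Cert34.

Section Cert5.
Variable g : net.
Hypothesis Hg : nn g = N.
Variables c1 c2 : nat.
Hypothesis HE : forall x y, edge g x y = cke k N p x y && ~~ same_pair c1 c2 x y.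
Hypothesis Hc1 : (c1 < k)%N.
Hypothesis Hc2 : (c2 < k)%N.
Hypothesis Hc12 : c1 != c2.

Definition c3 := if (c1 != 0%N) && (c2 != 0%N) then 0%N else if (c1 != 1%N) && (c2 != 1%N) then 1%N else 2%N.

Definition d5 w := if (N <= w)%N then None else if w == c1 then Some 0%N
  else if w == c2 then Some 2%N
  else if (w < k)%N then Some 1%N else if p w == c1 then Some 1%N
  else if p w == c2 then Some 3%N else Some 2%N.
Definition pi5 w := if w == c2 then c3 else if (w < k)%N then c1 else if p w == c1 then c1
  else if p w == c2 then c2 else p w.

Lemma cert5 : U g c1 = (k - 2 + L c1)%:R * b 3%N + (N - k - L c1 - L c2 + 1)%:R * b 2%N
   + (L c2)%:R * b 3%N.
Proof.
have Hc3 : [/\ (c3 < k)%N, c3 != c1 & c3 != c2] by rewrite /c3; do ! case: ifP; move=> *; split; lia.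
case: Hc3 => Hc3 Hc31 Hc32.
certstart g c1 d5 pi5 Hg.
- have E1 : deg g c1 = (k - 2 + L c1)%N.
    rewrite /deg /nodes Hg.
    rewrite (@count_linE _ (fun w => (w == c1) || (w == c2)) (fun w => w < k)%N (fun w => (k<=w)%N && (p w == c1))); last first.
      move=> w; rewrite mem_iota HE /cke /same_pair => Hw; have := Hp w; lia.
    rewrite count_lt ?count2 /L /Lc; lia.
  have E12 : count (fun w => (k <= w)%N && ((p w == c1) || (p w == c2))) (iota 0 N) = (L c1 + L c2)%N.
    rewrite (@count_linE _ pred0 (fun w => (k<=w)%N && (p w == c1)) (fun w => (k<=w)%N && (p w == c2))) ?count_pred0 /L /Lc; first lia.
    move=> w _ /=; lia.
  have HL : (L c1 + L c2 <= N - k)%N.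
    rewrite -E12 -count_ge; apply: sub_count => w /=; lia.
  have E2 : count (fun w => d5 w == Some 2%N) (nodes g) = (N - k - L c1 - L c2 + 1)%N.
    rewrite /nodes Hg.
    rewrite (@count_linE _ (fun w => (k<=w)%N && ((p w == c1) || (p w == c2))) (fun w => k <= w)%N (fun w => w == c2)); last first.
      move=> w; rewrite mem_iota /d5 => Hw; do ! case: ifP; move=> /= *; substs; lia.
    rewrite count_ge count1 ?E12; lia.
  have E3 : count (fun w => d5 w == Some 3%N) (nodes g) = L c2.
    rewrite /nodes Hg.
    rewrite (@count_linE _ pred0 (fun w => (k<=w)%N && (p w == c2)) pred0) ?count_pred0 /L /Lc; first lia.
    move=> w; rewrite mem_iota /d5 => Hw; do ! case: ifP; move=> /= *; substs; lia.
  have E4 : count (fun w => d5 w == Some 4%N) (nodes g) = 0%N.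
    rewrite (@eq_in_count _ _ pred0) ?count_pred0 // /nodes Hg.
    move=> w; rewrite mem_iota /d5 => Hw; do ! case: ifP => //.
  rewrite E1 E2 E3 E4 !mul0r !addr0 //.
- move=> w m; rewrite HE /cke /same_pair /d5 /pi5; have := Hp w; do ! case: ifP; cfin.
- move=> u w m; rewrite HE /cke /same_pair /d5; have := Hp u; have := Hp w; do ! case: ifP; cfin.
Qed.
End Cert5.
End CK.

Section CK2.
Variables (R : realFieldType) (b : nat -> R).
Variables (k N : nat) (p : nat -> nat).
Hypothesis Hk : (3 <= k)%N.
Hypothesis HN : (k + k <= N)%N.
Hypothesis Hp : forall w, (p w < k)%N.

Notation L := (Lc k N p).
Notation U g s := (util b (b 1%N - b 3%N) 0 g s).

Ltac certstartC g s d pi Hg := rewrite (@util_form R b k N Hk HN g s d pi); rewrite ?Hg; try lia;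
  [ | by rewrite /d; do ! case: ifP; cfin
    | by move=> w; rewrite /d; do ! case: ifP; cfin
    | idtac | idtac
    | by move=> w dd; rewrite /d; do ! case: ifP; cfin].

Section Cert6.
Variable g : net.
Hypothesis Hg : nn g = N.
Variables l j : nat.
Hypothesis HE : forall x y, edge g x y = cke k N p x y || same_pair l j x y.
Hypothesis Hj : (j < k)%N.
Hypothesis Hl : (k <= l < N)%N.
Hypothesis Hpl : p l != j.

Definition d6 w := if (N <= w)%N then None else if w == j then Some 0%N
  else if (w < k)%N then Some 1%N else if w == l then Some 1%N
  else if p w == j then Some 1%N else Some 2%N.
Definition pi6 w := if (w < k)%N then j else if w == l then j else if p w == j then j else p w.

Lemma cert6 : U g j = (k + L j)%:R * b 3%N + (N - k - L j - 1)%:R * b 2%N.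
Proof.
certstartC g j d6 pi6 Hg.
- have E0 : count (fun w => (k <= w)%N && ((p w == j) || (w == l))) (iota 0 N) = (L j + 1)%N.
    rewrite (@count_linE _ pred0 (fun w => (k<=w)%N && (p w == j)) (fun w => w == l)) ?count_pred0 ?count1 /L /Lc; try lia.
    move=> w _ /=; have := Hp w; case: (eqVneq w l) => [->|]; lia.
  have HL : (L j + 1 <= N - k)%N.
    rewrite -E0 -count_ge; apply: sub_count => w /=; lia.
  have E1 : deg g j = (k + L j)%N.
    rewrite /deg /nodes Hg.
    rewrite (@count_linE _ (fun w => w == j) (fun w => w < k)%N (fun w => (k <= w)%N && ((p w == j) || (w == l)))); last first.
      move=> w; rewrite mem_iota HE /cke /same_pair => Hw; have := Hp w; case: (eqVneq w l) => [->|]; lia.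
    rewrite count_lt ?count1 ?E0; lia.
  have E2 : count (fun w => d6 w == Some 2%N) (nodes g) = (N - k - L j - 1)%N.
    rewrite /nodes Hg.
    rewrite (@count_linE _ (fun w => (k <= w)%N && ((p w == j) || (w == l))) (fun w => k <= w)%N pred0); last first.
      move=> w; rewrite mem_iota /d6 => Hw; do ! case: ifP; move=> /= *; substs; lia.
    rewrite count_ge count_pred0 E0; lia.
  have E3 : forall d, count (fun w => d6 w == Some d.+3) (nodes g) = 0%N.
    move=> d; rewrite (@eq_in_count _ _ pred0) ?count_pred0 // /nodes Hg.
    move=> w; rewrite mem_iota /d6 => Hw; do ! case: ifP => //.
  rewrite E1 E2 (E3 0%N) (E3 1%N) !mul0r !addr0 //.
- move=> w m; rewrite HE /cke /same_pair /d6 /pi6; have := Hp w; have := Hp l; do ! case: ifP; cfin.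
- move=> u w m; rewrite HE /cke /same_pair /d6; have := Hp u; have := Hp w; have := Hp l; do ! case: ifP; cfin.
Qed.
End Cert6.

Section Cert78.
Variable g : net.
Hypothesis Hg : nn g = N.
Variables l1 l2 : nat.
Hypothesis HE : forall x y, edge g x y = cke k N p x y || same_pair l1 l2 x y.
Hypothesis Hl1 : (k <= l1 < N)%N.
Hypothesis Hl2 : (k <= l2 < N)%N.
Hypothesis Hl12 : l1 != l2.

Definition d7 w := if (N <= w)%N then None else if w == l1 then Some 0%N
  else if w == p l1 then Some 1%N else if w == l2 then Some 1%N else if (w < k)%N then Some 2%N
  else if p w == p l1 then Some 2%N else Some 3%N.
Definition pi7 w := if w == p l1 then l1 else if w == l2 then l1 else if (w < k)%N then p l1
  else if p w == p l1 then p l1 else p w.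

Lemma cert78 : U g l1 = 2%:R * b 3%N +
  (if p l2 == p l1 then (k + L (p l1) - 3)%:R * b 2%N + (N - k - L (p l1))%:R * b 3%N
   else (k + L (p l1) - 2)%:R * b 2%N + (N - k - L (p l1) - 1)%:R * b 3%N).
Proof.
have Hq := Hp l1.
certstartC g l1 d7 pi7 Hg.
- have E1 : deg g l1 = 2%N.
    rewrite /deg /nodes Hg.
    rewrite (@count_linE _ pred0 (fun w => (w == p l1) || (w == l2)) pred0); last first.
      move=> w; rewrite mem_iota HE /cke /same_pair /= => Hw; have := Hp w; case: (eqVneq w l2) => [->|]; lia.
    rewrite ?count2 ?count_pred0; lia.
  have E4 : count (fun w => d7 w == Some 4%N) (nodes g) = 0%N.
    rewrite (@eq_in_count _ _ pred0) ?count_pred0 // /nodes Hg.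
    move=> w; rewrite mem_iota /d7 => Hw; do ! case: ifP => //.
  rewrite E1 E4 mul0r addr0 -!addrA; congr (_ + _).
  case: ifP => Hq2.
  + have E2 : count (fun w => d7 w == Some 2%N) (nodes g) = (k + L (p l1) - 3)%N.
      rewrite /nodes Hg.
      rewrite (@count_linE _ (fun w => [|| w == p l1, w == l1 | w == l2]) (fun w => w < k)%N (fun w => (k<=w)%N && (p w == p l1))); last first.
        move=> w; rewrite mem_iota /d7 => Hw; case: (eqVneq w l2) => [->|?]; [|case: (eqVneq w l1) => [->|?]]; do ! case: ifP; move=> /= *; substs; lia.
      rewrite count_lt ?count3 /L /Lc; lia.
    have E3 : count (fun w => d7 w == Some 3%N) (nodes g) = (N - k - L (p l1))%N.
      rewrite /nodes Hg.
      rewrite (@count_linE _ (fun w => (k<=w)%N && (p w == p l1)) (fun w => k <= w)%N pred0); last first.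
        move=> w; rewrite mem_iota /d7 => Hw; case: (eqVneq w l2) => [->|?]; [|case: (eqVneq w l1) => [->|?]]; do ! case: ifP; move=> /= *; substs; lia.
      rewrite count_ge count_pred0 /L /Lc; lia.
    by rewrite E2 E3.
  + have E0 : count (fun w => (k <= w)%N && ((p w == p l1) || (w == l2))) (iota 0 N) = (L (p l1) + 1)%N.
      rewrite (@count_linE _ pred0 (fun w => (k<=w)%N && (p w == p l1)) (fun w => w == l2)) ?count_pred0 ?count1 /L /Lc; try lia.
      move=> w _ /=; case: (eqVneq w l2) => [->|]; lia.
    have E2 : count (fun w => d7 w == Some 2%N) (nodes g) = (k + L (p l1) - 2)%N.
      rewrite /nodes Hg.
      rewrite (@count_linE _ (fun w => (w == p l1) || (w == l1)) (fun w => w < k)%N (fun w => (k<=w)%N && (p w == p l1))); last first.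
        move=> w; rewrite mem_iota /d7 => Hw; case: (eqVneq w l2) => [->|?]; [|case: (eqVneq w l1) => [->|?]]; do ! case: ifP; move=> /= *; substs; lia.
      rewrite count_lt ?count2 /L /Lc; lia.
    have E3 : count (fun w => d7 w == Some 3%N) (nodes g) = (N - k - L (p l1) - 1)%N.
      rewrite /nodes Hg.
      rewrite (@count_linE _ (fun w => (k <= w)%N && ((p w == p l1) || (w == l2))) (fun w => k <= w)%N pred0); last first.
        move=> w; rewrite mem_iota /d7 => Hw; case: (eqVneq w l2) => [->|?]; [|case: (eqVneq w l1) => [->|?]]; do ! case: ifP; move=> /= *; substs; lia.
      rewrite count_ge count_pred0 E0; lia.
    by rewrite E2 E3.
- move=> w m; rewrite HE /cke /same_pair /d7 /pi7; have := Hp w; have := Hp l2; do ! case: ifP; cfin.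
- move=> u w m; rewrite HE /cke /same_pair /d7; have := Hp u; have := Hp w; have := Hp l2; do ! case: ifP; cfin.
Qed.
End Cert78.
End CK2.

Section CK3.
Variables (R : realFieldType) (b : nat -> R).
Variables (k N : nat) (p : nat -> nat).
Hypothesis Hk : (3 <= k)%N.
Hypothesis HN : (k + k <= N)%N.
Hypothesis Hp : forall w, (p w < k)%N.

Notation L := (Lc k N p).
Notation U g s := (util b (b 1%N - b 3%N) 0 g s).

Hypothesis HN1 : (k + k <= N.+1)%N.

Ltac certstartD g s d pi Hg := rewrite (@util_form R b k N.+1 Hk HN1 g s d pi); rewrite ?Hg; try lia;
  [ | by rewrite /d; do ! case: ifP; cfin
    | by move=> w; rewrite /d; do ! case: ifP; cfin
    | idtac | idtac
    | by move=> w dd; rewrite /d; do ! case: ifP; cfin].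

Section Cert9.
Variable g : net.
Hypothesis Hg : nn g = N.+1.
Variable T : nat.
Hypothesis HE : forall x y, edge g x y = cke k N p x y || same_pair N T x y.
Hypothesis HT : (k <= T < N)%N.

Definition d9 w := if (N < w)%N then None else if w == N then Some 0%N
  else if w == T then Some 1%N else if w == p T then Some 2%N else if (w < k)%N then Some 3%N
  else if p w == p T then Some 3%N else Some 4%N.
Definition pi9 w := if w == T then N else if w == p T then T else if (w < k)%N then p T
  else if p w == p T then p T else p w.

Lemma cert9 : U g N = b 3%N + b 2%N + (k + L (p T) - 2)%:R * b 3%N + (N - k - L (p T))%:R * b 4%N.
Proof.
have Hq := Hp T.
certstartD g N d9 pi9 Hg.
- have E1 : deg g N = 1%N.
    rewrite /deg /nodes Hg.
    rewrite (@count_linE _ pred0 (fun w => w == T) pred0); last first.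
      move=> w; rewrite mem_iota HE /cke /same_pair /= => Hw; lia.
    rewrite ?count1 ?count_pred0; lia.
  have E2 : count (fun w => d9 w == Some 2%N) (nodes g) = 1%N.
    rewrite /nodes Hg.
    rewrite (@count_linE _ pred0 (fun w => w == p T) pred0); last first.
      move=> w; rewrite mem_iota /d9 => Hw; do ! case: ifP; move=> /= *; substs; lia.
    rewrite ?count1 ?count_pred0; lia.
  have EL : count (fun w => (w < N)%N && ((k <= w)%N && (p w == p T))) (iota 0 N.+1) = L (p T).
    by rewrite count_last.
  have E3 : count (fun w => d9 w == Some 3%N) (nodes g) = (k + L (p T) - 2)%N.
    rewrite /nodes Hg.
    rewrite (@count_linE _ (fun w => (w == p T) || (w == T)) (fun w => w < k)%N (fun w => (w < N)%N && ((k <= w)%N && (p w == p T)))); last first.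
      move=> w; rewrite mem_iota /d9 => Hw; case: (eqVneq w T) => [->|?]; do ! case: ifP; move=> /= *; substs; lia.
    rewrite count_lt ?count2 ?EL; lia.
  have E0 : count (fun w => ((w < N)%N && ((k <= w)%N && (p w == p T))) || (w == N)) (iota 0 N.+1) = (L (p T) + 1)%N.
    rewrite (@count_linE _ pred0 (fun w => (w < N)%N && ((k <= w)%N && (p w == p T))) (fun w => w == N)) ?count_pred0 ?count1 ?EL; try lia.
    move=> w _ /=; lia.
  have HL : (L (p T) + 1 <= N.+1 - k)%N.
    rewrite -E0 -count_ge; apply: sub_count => w /=; lia.
  have E4 : count (fun w => d9 w == Some 4%N) (nodes g) = (N - k - L (p T))%N.
    rewrite /nodes Hg.
    rewrite (@count_linE _ (fun w => ((w < N)%N && ((k <= w)%N && (p w == p T))) || (w == N)) (fun w => k <= w)%N pred0); last first.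
      move=> w; rewrite mem_iota /d9 => Hw; case: (eqVneq w T) => [->|?]; do ! case: ifP; move=> /= *; substs; lia.
    rewrite count_ge count_pred0 E0; lia.
  rewrite E1 E2 E3 E4 mul1r; ring.
- move=> w m; rewrite HE /cke /same_pair /d9 /pi9; have := Hp w; do ! case: ifP; cfin.
- move=> u w m; rewrite HE /cke /same_pair /d9; have := Hp u; have := Hp w; do ! case: ifP; cfin.
Qed.
End Cert9.

Definition pext (T : nat) w := if w == N then T else p w.

Lemma pext_lt T : (T < k)%N -> forall w, (pext T w < k)%N.
Proof. by move=> HT w; rewrite /pext; case: ifP. Qed.

Lemma enter_edge g T : nn g = N -> (forall x y, edge g x y = cke k N p x y) -> (T < k)%N ->
  forall x y, edge (enter g T) x y = cke k N.+1 (pext T) x y.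
Proof.
move=> Hg HE HT x y; rewrite edge_enter Hg ?HE /cke /same_pair /pext; last lia.
have := Hp x; have := Hp y; do ! case: ifP; move=> /= *; substs; lia.
Qed.

Lemma Lc_ext T c : (T < k)%N -> Lc k N.+1 (pext T) c = (L c + (T == c))%N.
Proof.
move=> HT; rewrite /Lc -addn1 iotaD count_cat /= add0n /pext eqxx.
congr (_ + _)%N.
  by apply: eq_in_count => w; rewrite mem_iota => /andP[_ Hw]; have -> : (w == N) = false by lia.
have -> : (k <= N)%N by lia.
by rewrite addn0.
Qed.
End CK3.

Ltac natR := rewrite ?natrD ?mulrS /=; repeat (rewrite natrB; last by lia).

Section Stab.
Variables (R : realFieldType) (b : nat -> R).
Variables (k N : nat) (p : nat -> nat) (g : net).
Hypothesis Hk : (3 <= k)%N.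
Hypothesis HN : (k + k <= N)%N.
Hypothesis Hp : forall w, (p w < k)%N.
Hypothesis Hg : nn g = N.
Hypothesis HE : forall x y, edge g x y = cke k N p x y.
Hypothesis HL1 : forall c, (c < k)%N -> (1 <= Lc k N p c)%N.
Hypothesis Hb2 : b 3%N < b 2%N.
Hypothesis Hb3 : b 4%N < b 3%N.
Hypothesis Hb4 : 0 < b 4%N.

Notation L := (Lc k N p).
Notation U g s := (util b (b 1%N - b 3%N) 0 g s).

Lemma L2 c1 c2 : (c1 < k)%N -> (c2 < k)%N -> c1 != c2 -> (L c1 + L c2 <= N - k)%N.
Proof.
move=> H1 H2 H12.
have E12 : count (fun w => (k <= w)%N && ((p w == c1) || (p w == c2))) (iota 0 N) = (L c1 + L c2)%N.
  rewrite (@count_linE _ pred0 (fun w => (k<=w)%N && (p w == c1)) (fun w => (k<=w)%N && (p w == c2))) ?count_pred0 /Lc; first lia.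
  move=> w _ /=; lia.
rewrite -E12 -count_ge; apply: sub_count => w /=; lia.
Qed.

Lemma other c : (c < k)%N -> exists c', [/\ (c' < k)%N & c' != c].
Proof. move=> Hc; exists (if c == 0%N then 1%N else 0%N); case: ifP => H; split; lia. Qed.

Lemma Lle c : (c < k)%N -> (1 <= L c)%N /\ (L c + 1 <= N - k)%N.
Proof.
move=> Hc; have [c' [Hc' Hne]] := other Hc.
have := L2 Hc Hc' (negbT (introF eqP (fun e => (negP Hne) (introT eqP (esym e))))).
have := HL1 Hc'; have := HL1 Hc; lia.
Qed.

Lemma stable : pairwise_stable b (b 1%N - b 3%N) 0 g.
Proof.
have Hb2' := Hb2; have Hb3' := Hb3; have Hb4' := Hb4.
have Hb3p : 0 < b 3%N by lra.
have Hb2p : 0 < b 2%N by lra.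
split.
- move=> i j; rewrite HE /cke => /and3P[Hi Hj /or3P[/and3P[Hi' Hj' Hij]|/andP[Hkj /eqP Hipj]|/andP[Hki /eqP Hjpi]]].
  +
    have HE' : forall x y, edge (del_link g i j) x y = cke k N p x y && ~~ same_pair i j x y.
      by move=> x y; rewrite edge_del HE.
    have HE'' : forall x y, edge (del_link g i j) x y = cke k N p x y && ~~ same_pair j i x y.
      by move=> x y; rewrite HE' same_pairC.
    have Hji : j != i by rewrite eq_sym.
    rewrite (cert5 b Hk HN Hp (g:=del_link g i j) Hg HE' Hi' Hj' Hij).
    rewrite (cert5 b Hk HN Hp (g:=del_link g i j) Hg HE'' Hj' Hi' Hji).
    rewrite !(cert1 b Hk HN Hp Hg HE) //.
    have := L2 Hi' Hj' Hij. have := HL1 Hi'. have := HL1 Hj' => *.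
    have Ri : 1 <= (L i)%:R :> R by rewrite ler1n HL1.
    have Rj : 1 <= (L j)%:R :> R by rewrite ler1n HL1.
    split; natR; nra.
  +
    have Hi' : (i < k)%N by rewrite Hipj.
    have HE' : forall x y, edge (del_link g i j) x y = cke k N p x y && ~~ same_pair i j x y.
      by move=> x y; rewrite edge_del HE.
    have Hjj : (k <= j < N)%N by lia.
    rewrite (cert3 b Hk HN Hp (g:=del_link g i j) Hg HE' Hi' Hjj (esym Hipj)).
    rewrite (cert4 b Hk HN Hp (g:=del_link g i j) Hg HE' Hi' Hjj (esym Hipj)).
    rewrite (cert1 b Hk HN Hp Hg HE Hi') (cert2 b Hk HN Hp Hg HE Hjj).
    have [? ?] := Lle Hi'.
    split; first by natR; nra.
    by apply: addr_ge0; first apply: addr_ge0; try apply: mulr_ge0; rewrite ?ler0n ?ltW.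
  +
    have Hj' : (j < k)%N by rewrite Hjpi.
    have HE' : forall x y, edge (del_link g i j) x y = cke k N p x y && ~~ same_pair j i x y.
      by move=> x y; rewrite edge_del HE same_pairC.
    have Hii : (k <= i < N)%N by lia.
    rewrite (cert3 b Hk HN Hp (g:=del_link g i j) Hg HE' Hj' Hii (esym Hjpi)).
    rewrite (cert4 b Hk HN Hp (g:=del_link g i j) Hg HE' Hj' Hii (esym Hjpi)).
    rewrite (cert1 b Hk HN Hp Hg HE Hj') (cert2 b Hk HN Hp Hg HE Hii).
    have [? ?] := Lle Hj'.
    split; last by natR; nra.
    by apply: addr_ge0; first apply: addr_ge0; try apply: mulr_ge0; rewrite ?ler0n ?ltW.
- move=> i j; rewrite Hg => Hi Hj Hij; rewrite HE /cke Hi Hj /= => Hne.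
  have HE' : forall x y, edge (add_link g i j) x y = cke k N p x y || same_pair i j x y.
    by move=> x y; rewrite edge_add ?Hg // HE.
  case: (ltnP i k) => Hik; case: (ltnP j k) => Hjk.
  + exfalso; move: Hne; rewrite Hik Hjk Hij; lia.
  +
    have Hpj : p j != i by move: Hne; rewrite Hik /=; lia.
    have HE'' : forall x y, edge (add_link g i j) x y = cke k N p x y || same_pair j i x y.
      by move=> x y; rewrite HE' same_pairC.
    have Hjj : (k <= j < N)%N by lia.
    rewrite (cert6 b Hk HN Hp (g:=add_link g i j) Hg HE'' Hik Hjj Hpj).
    rewrite (cert1 b Hk HN Hp Hg HE Hik).
    have [? ?] := Lle Hik.
    natR => H; exfalso; nra.
  +
    have Hpi : p i != j by move: Hne; rewrite Hjk /=; lia.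
    have Hii : (k <= i < N)%N by lia.
    rewrite (cert6 b Hk HN Hp (g:=add_link g i j) Hg HE' Hjk Hii Hpi).
    rewrite (cert1 b Hk HN Hp Hg HE Hjk).
    have [? ?] := Lle Hjk.
    move=> _; natR; nra.
  +
    have Hii : (k <= i < N)%N by lia.
    have Hjj : (k <= j < N)%N by lia.
    rewrite (cert78 b Hk HN Hp (g:=add_link g i j) Hg HE' Hii Hjj Hij).
    rewrite (cert2 b Hk HN Hp Hg HE Hii).
    have [? ?] := Lle (Hp i).
    case: ifP => Hpp.
    * natR => H; exfalso; nra.
    * have Hpp' : p j != p i by rewrite Hpp.
      have := L2 (Hp j) (Hp i) Hpp'. move=> ?.
      natR => H; exfalso; nra.
Qed.
End Stab.

Lemma sum_two (h : nat -> nat) k a b : (a < k)%N -> (b < k)%N -> a != b ->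
  (h a + h b <= \sum_(c < k) h c)%N.
Proof.
move=> Ha Hb Hab.
rewrite (bigD1 (Ordinal Ha)) //= (bigD1 (Ordinal Hb)) /=; last by rewrite -val_eqE /= eq_sym.
by rewrite addnA leq_addr.
Qed.

Lemma exists_min (f : nat -> nat) k : (0 < k)%N -> exists c, (c < k)%N /\ forall c', (c' < k)%N -> (f c <= f c')%N.
Proof.
elim: k => [|k IH] // _.
case: (posnP k) => Hk.
  by subst; exists 0%N; split => // c' Hc'; have -> : c' = 0%N by lia.
have [c [Hc Hmin]] := IH Hk.
case: (leqP (f c) (f k)) => H.
  exists c; split; first lia. move=> c' Hc'; case: (ltnP c' k) => Hc'k; first exact: Hmin.
  by have -> : c' = k by lia.
exists k; split; first lia. move=> c' Hc'; case: (ltnP c' k) => Hc'k.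
  have := Hmin _ Hc'k; lia.
by have -> : c' = k by lia.
Qed.

Section Entry.
Variables (R : realFieldType) (b : nat -> R) (c0 : R).
Variables (k N : nat) (p : nat -> nat) (g : net).
Hypothesis Hk : (3 <= k)%N.
Hypothesis HN : (k + k <= N)%N.
Hypothesis Hp : forall w, (p w < k)%N.
Hypothesis Hg : nn g = N.
Hypothesis HE : forall x y, edge g x y = cke k N p x y.
Hypothesis HL1 : forall c, (c < k)%N -> (1 <= Lc k N p c)%N.
Hypothesis Hb2 : b 3%N < b 2%N.
Hypothesis Hb3 : b 4%N < b 3%N.
Hypothesis Hb4 : 0 < b 4%N.
Hypothesis Hc0l : b 2%N - b 3%N < c0.
Hypothesis Hc0r : c0 < b 2%N - b 4%N.

Notation L := (Lc k N p).
Notation U g s := (util b (b 1%N - b 3%N) 0 g s).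
Notation EV T := (entry_value b (b 1%N - b 3%N) 0 c0 g T).

Lemma HN1 : (k + k <= N.+1)%N. Proof. lia. Qed.

Lemma nn_enter T : nn (enter g T) = N.+1.
Proof. by rewrite /enter /add_link /= Hg. Qed.

Lemma sumL : (N - k)%N = \sum_(c < k) L c.
Proof.
rewrite -count_ge /Lc.
elim: (iota 0 N) => [|x s IH] /=; first by rewrite big1.
rewrite big_split /= -IH; congr (_ + _)%N.
rewrite (bigD1 (Ordinal (Hp x))) //= eqxx andbT big1; first lia.
move=> c Hc; rewrite -val_eqE /= in Hc.
by rewrite eq_sym (negbTE Hc) andbF.
Qed.

Lemma two_bound a a' : (a < k)%N -> (a' < k)%N -> a != a' -> (L a + L a' + k - 2 <= N - k)%N.
Proof.
move=> Ha Ha' Hne.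
rewrite sumL.
have -> : (\sum_(c < k) L c = k + \sum_(c < k) (L c - 1))%N.
  have -> : (\sum_(c < k) L c = \sum_(c < k) (1 + (L c - 1)))%N.
    by apply: eq_bigr => c _; have := HL1 (ltn_ord c); lia.
  by rewrite big_split /= sum1_card card_ord.
have := sum_two (fun c => L c - 1)%N Ha Ha' Hne.
have := HL1 Ha; have := HL1 Ha'; lia.
Qed.

Lemma ev_center T : (T < k)%N ->
  EV T = - c0 * (k - 1 + L T)%:R + (b 3%N + (k - 1 + L T)%:R * b 2%N + (N - k - L T)%:R * b 3%N).
Proof.
move=> HT; rewrite /entry_value Hg (deg_center Hk HN Hp Hg HE HT).
have HE' := enter_edge Hk HN Hp HN1 Hg HE HT.
have HN' : (k <= N < N.+1)%N by lia.
rewrite (cert2 b Hk HN1 (pext_lt N Hp HT) (nn_enter T) HE' HN').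
rewrite (Lc_ext p Hk HN HN1) /pext ?eqxx //.
have -> : (k + (L T + 1) - 2 = k - 1 + L T)%N by lia.
by have -> : (N.+1 - k - (L T + 1) = N - k - L T)%N by lia.
Qed.

Lemma ev_leaf T : (k <= T < N)%N ->
  EV T = - c0 + (b 3%N + b 2%N + (k + L (p T) - 2)%:R * b 3%N + (N - k - L (p T))%:R * b 4%N).
Proof.
move=> HT; rewrite /entry_value Hg (deg_leaf Hk HN Hp Hg HE HT) mulr1.
have HE' : forall x y, edge (enter g T) x y = cke k N p x y || same_pair N T x y.
  by move=> x y; rewrite edge_enter ?Hg ?HE //; lia.
by rewrite (cert9 b Hk HN Hp HN1 (nn_enter T) HE' HT).
Qed.

Lemma accepts_center T : (T < k)%N -> accepts b (b 1%N - b 3%N) 0 g T.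
Proof.
move=> HT; split; first by rewrite Hg; lia.
have HE' := enter_edge Hk HN Hp HN1 Hg HE HT.
rewrite (cert1 b Hk HN1 (pext_lt N Hp HT) (nn_enter T) HE' HT).
rewrite (cert1 b Hk HN Hp Hg HE HT).
rewrite (Lc_ext p Hk HN HN1) // eqxx.
have [H1 H2] := @Lle R b k N p g Hk HN Hg HL1 Hb2 Hb3 Hb4 T HT.
have Hb3' := Hb3; have Hb4' := Hb4; have Hb2' := Hb2.
natR; lra.
Qed.

Lemma ev_pos cs : (cs < k)%N -> 0 < EV cs.
Proof.
move=> Hcs; rewrite (ev_center Hcs).
have [H1 H2] := @Lle R b k N p g Hk HN Hg HL1 Hb2 Hb3 Hb4 cs Hcs.
have Hb3' := Hb3; have Hb4' := Hb4; have Hb2' := Hb2; have Hc0r' := Hc0r.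
have R1 : 1 <= (Lc k N p cs)%:R :> R by rewrite ler1n.
have R2 : 1 <= (N - k - Lc k N p cs)%:R :> R by rewrite ler1n; lia.
have Rk : 3 <= k%:R :> R by rewrite (ler_nat R 3 k).
move: R2; natR => R2.
nra.
Qed.

Lemma ev_best cs : (cs < k)%N -> (forall c, (c < k)%N -> (L cs <= L c)%N) ->
  forall T, (T < N)%N -> EV T <= EV cs /\ (EV cs <= EV T -> (T < k)%N /\ L T = L cs).
Proof.
move=> Hcs Hmin T HT.
have Hb3' := Hb3; have Hb4' := Hb4; have Hb2' := Hb2; have Hc0r' := Hc0r; have Hc0l' := Hc0l.
have [H1 H2] := @Lle R b k N p g Hk HN Hg HL1 Hb2 Hb3 Hb4 cs Hcs.
have Rk : 3 <= k%:R :> R by rewrite (ler_nat R 3 k).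
case: (ltnP T k) => HTk.
- have [H1' H2'] := @Lle R b k N p g Hk HN Hg HL1 Hb2 Hb3 Hb4 T HTk.
  have Hm := Hmin T HTk.
  rewrite (ev_center HTk) (ev_center Hcs).
  have Rm : (L cs)%:R <= (L T)%:R :> R by rewrite ler_nat.
  split; first by natR; nra.
  case: (eqVneq (L T) (L cs)) => [E|Ne] H; first by [].
  exfalso; have Rm' : (L cs)%:R + 1 <= (L T)%:R :> R by rewrite natr1 ler_nat; lia.
  move: H; natR => H; nra.
- have HTT : (k <= T < N)%N by lia.
  have Hq := Hp T.
  have Hbd : (L (p T) + L cs + k - 2 <= N - k)%N.
    case: (eqVneq (p T) cs) => [E|Ne].
      have [c' [Hc' Hne]] := @other R b k N g Hk HN Hg Hb2 Hb3 Hb4 cs Hcs.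
      have := two_bound Hcs Hc' (negbT (introF eqP (fun e => (negP Hne) (introT eqP (esym e))))).
      have := Hmin c' Hc'. rewrite E. lia.
    exact: two_bound.
  have Rbd : ((L (p T) + L cs + k - 2)%:R <= (N - k)%:R :> R) by rewrite ler_nat.
  move: Rbd; natR => Rbd.
  have R1 : 1 <= (L cs)%:R :> R by rewrite ler1n.
  have R1' : 1 <= (L (p T))%:R :> R by rewrite ler1n HL1.
  have Hlt : EV T < EV cs.
    rewrite (ev_leaf HTT) (ev_center Hcs).
    natR; nra.
  split; first exact: ltW.
  move=> H; exfalso; lra.
Qed.
End Entry.

Definition Bal k N p := (forall c, (c < k)%N -> (1 <= Lc k N p c)%N) /\
  (forall c c', (c < k)%N -> (c' < k)%N -> (Lc k N p c <= Lc k N p c' + 1)%N).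

Definition Inv k g := exists p, [/\ (k + k <= nn g)%N, (forall w, (p w < k)%N),
  (forall x y, edge g x y = cke k (nn g) p x y) & Bal k (nn g) p].

Section Final.
Variables (R : realFieldType) (b : nat -> R) (c0 : R) (k : nat).
Hypothesis Hk : (3 <= k)%N.
Hypothesis Hb2 : b 3%N < b 2%N.
Hypothesis Hb3 : b 4%N < b 3%N.
Hypothesis Hb4 : 0 < b 4%N.
Hypothesis Hc0l : b 2%N - b 3%N < c0.
Hypothesis Hc0r : c0 < b 2%N - b 4%N.

Notation EV g T := (entry_value b (b 1%N - b 3%N) 0 c0 g T).

Lemma inv_stable g : Inv k g -> pairwise_stable b (b 1%N - b 3%N) 0 g.
Proof.
case=> p [HN Hp HE [HL1 _]].
exact: (@stable R b k (nn g) p g Hk HN Hp erefl HE HL1 Hb2 Hb3 Hb4).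
Qed.

Lemma inv_enter g p T : (k + k <= nn g)%N -> (forall w, (p w < k)%N) ->
  (forall x y, edge g x y = cke k (nn g) p x y) -> Bal k (nn g) p ->
  (T < k)%N -> (forall c, (c < k)%N -> (Lc k (nn g) p T <= Lc k (nn g) p c)%N) ->
  Inv k (enter g T).
Proof.
move=> HN Hp HE [HL1 HLb] HT Hmin.
have HN1 : (k + k <= (nn g).+1)%N by lia.
exists (pext (nn g) p T).
rewrite (nn_enter erefl).
split => //.
- exact: pext_lt.
- exact: (enter_edge Hk HN Hp HN1 erefl HE HT).
- split.
  + move=> c Hc; rewrite (Lc_ext p Hk HN HN1 c HT); have := HL1 c Hc; lia.
  + move=> c c' Hc Hc'; rewrite !(Lc_ext p Hk HN HN1 _ HT).
    have := HLb c c' Hc Hc'; have := Hmin c Hc; have := Hmin c' Hc'.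
    case: (eqVneq T c) => [<-|?]; case: (eqVneq T c') => [<-|?] /=; lia.
Qed.

Lemma inv_min g : Inv k g -> exists p cs, [/\ (k + k <= nn g)%N, (forall w, (p w < k)%N),
  (forall x y, edge g x y = cke k (nn g) p x y), Bal k (nn g) p &
  ((cs < k)%N /\ forall c, (c < k)%N -> (Lc k (nn g) p cs <= Lc k (nn g) p c)%N)].
Proof.
case=> p [HN Hp HE HB].
have [cs Hcs] := @exists_min (Lc k (nn g) p) k ltac:(lia).
by exists p, cs.
Qed.

Lemma inv_step g g' : Inv k g -> step b (b 1%N - b 3%N) 0 c0 g g' -> Inv k g'.
Proof.
move=> HI [[Hns _]|[_ [T [Hacc [Hpos [Hmax ->]]]]]].
  by exfalso; apply: Hns; exact: inv_stable.
have [p [cs [HN Hp HE [HL1 HLb] [Hcs Hmin]]]] := inv_min HI.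
have Hacs := @accepts_center R b c0 k (nn g) p g Hk HN Hp erefl HE HL1 Hb2 Hb3 Hb4 Hc0l Hc0r cs Hcs.
have Hle := Hmax cs Hacs.
have [_ H] := @ev_best R b c0 k (nn g) p g Hk HN Hp erefl HE HL1 Hb2 Hb3 Hb4 Hc0l Hc0r cs Hcs Hmin T (proj1 Hacc).
have [HTk HLT] := H Hle.
apply: (inv_enter HN Hp HE (conj HL1 HLb) HTk).
by move=> c Hc; rewrite HLT; exact: Hmin.
Qed.

Lemma inv_entry g : Inv k g -> exists g', step b (b 1%N - b 3%N) 0 c0 g g' /\ Inv k g' /\ nn g' = (nn g).+1.
Proof.
move=> HI.
have [p [cs [HN Hp HE [HL1 HLb] [Hcs Hmin]]]] := inv_min HI.
exists (enter g cs); split; last split.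
- right; split; first exact: inv_stable.
  exists cs; split.
    exact: (@accepts_center R b c0 k (nn g) p g Hk HN Hp erefl HE HL1 Hb2 Hb3 Hb4 Hc0l Hc0r cs Hcs).
  split; first exact: (@ev_pos R b c0 k (nn g) p g Hk HN Hp erefl HE HL1 Hb2 Hb3 Hb4 Hc0l Hc0r cs Hcs).
  split => //.
  move=> T' [HT' _].
  by have [] := @ev_best R b c0 k (nn g) p g Hk HN Hp erefl HE HL1 Hb2 Hb3 Hb4 Hc0l Hc0r cs Hcs Hmin T' HT'.
- exact: (inv_enter HN Hp HE (conj HL1 HLb) Hcs).
- exact: nn_enter.
Qed.

Lemma inv_kstar g : Inv k g -> is_kstar k g.
Proof.
case=> p [HN Hp HE [HL1 HLb]].
split => //.
exists (iota 0 k); split.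
  split; [exact: iota_uniq | by rewrite size_iota | apply/allP => x; rewrite mem_iota; lia].
have HLC : forall x, (x < k)%N -> leaf_count g (iota 0 k) x = Lc k (nn g) p x.
  move=> x Hx; rewrite /leaf_count /Lc /nodes; apply: eq_in_count => w.
  rewrite !mem_iota HE /cke => Hw; have := Hp w; lia.
split.
- move=> x y; rewrite !mem_iota HE /cke => Hx Hy Hxy; lia.
- move=> w Hw; rewrite mem_iota => Hw'.
  have Hl : (k <= w < nn g)%N by lia.
  split; first exact: (deg_leaf Hk HN Hp erefl HE Hl).
  exists (p w); rewrite mem_iota HE /cke; have := Hp w; split; lia.
- move=> x y; rewrite !mem_iota => Hx Hy.
  rewrite !HLC; try lia.
  have := HL1 x; have := HLb x y; split; lia.
Qed.

Definition pb w := if (k <= w < k + k)%N then (w - k)%N else 0%N.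

Lemma inv_base : Inv k (kstar_base k).
Proof.
exists pb; rewrite /=; split => //.
- by move=> w; rewrite /pb; case: ifP; lia.
- move=> x y; rewrite /edge /kstar_base /cke /pb /=; do ! case: ifP; move=> /= *; lia.
- have HL : forall c, (c < k)%N -> Lc k (k + k) pb c = 1%N.
    move=> c Hc; rewrite /Lc (@eq_in_count _ _ (fun w => w == c + k)).
      by rewrite count1 //; lia.
    move=> w; rewrite mem_iota /pb => Hw; case: ifP; lia.
  split => [c Hc|c c' Hc Hc']; rewrite !HL //.
Qed.
End Final.

Unset Implicit Arguments.
Theorem theorem5 (R : realFieldType) (k : nat) (b : nat -> R) (c gam c0 : R) :
  (3 <= k)%N ->
  (forall i, (0 < i)%N -> 0 < b i) ->
  (forall i, (0 < i)%N -> b i.+1 < b i) ->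
  gam = 0 ->
  c = b 1%N - b 3%N ->
  b 2%N - b 3%N < c0 -> c0 < b 2%N - b 4%N ->
  let reach := clos_refl_trans net (step b c gam c0) in
  (forall g, reach (kstar_base k) g -> pairwise_stable b c gam g -> is_kstar k g) /\
  (forall g, reach (kstar_base k) g -> forall n, (nn g <= n)%N ->
     exists g', reach g g' /\ pairwise_stable b c gam g' /\ nn g' = n).
Proof.
move=> Hk Hbpos Hbdec Hgam Hc Hc0l Hc0r reach.
subst gam c.
have Hb2 : b 3%N < b 2%N := Hbdec 2%N isT.
have Hb3 : b 4%N < b 3%N := Hbdec 3%N isT.
have Hb4 : 0 < b 4%N := Hbpos 4%N isT.
have Hreach : forall x y, reach x y -> Inv k x -> Inv k y.
  move=> x y; elim => [x' y' Hs|x'|x' y' z' _ IH1 _ IH2] // HI.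
    exact: (@inv_step R b c0 k Hk Hb2 Hb3 Hb4 Hc0l Hc0r _ _ HI Hs).
  by apply: IH2; apply: IH1.
split.
- move=> g Hg _; apply: (@inv_kstar R b c0 k Hk Hb2 Hb3 Hb4 Hc0l Hc0r); exact: (Hreach _ _ Hg (@inv_base R b c0 k Hk Hb2 Hb3 Hb4 Hc0l Hc0r)).
- move=> g Hg n Hn.
  have HI := Hreach _ _ Hg (@inv_base R b c0 k Hk Hb2 Hb3 Hb4 Hc0l Hc0r).
  have Hgen : forall d g, Inv k g -> exists g', reach g g' /\ Inv k g' /\ nn g' = (nn g + d)%N.
    elim => [|d IH] g0 HI0.
      exists g0; split; [exact: rt_refl | split => //; lia].
    have [g1 [H1 [HI1 Hn1]]] := IH g0 HI0.
    have [g2 [Hs [HI2 Hn2]]] := @inv_entry R b c0 k Hk Hb2 Hb3 Hb4 Hc0l Hc0r _ HI1.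
    exists g2; split; [exact: (rt_trans _ _ _ _ _ H1 (rt_step _ _ _ _ Hs)) | split => //; lia].
  have [g' [H1 [HI' Hn']]] := Hgen (n - nn g)%N g HI.
  exists g'; split => //; split; [exact: (@inv_stable R b k Hk Hb2 Hb3 Hb4 _ HI') | lia].
Qed.
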